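(* Let $A\subseteq[0,1]^d$ be an up-closed $0/1$-polytope and $B\subseteq[0,1]^d$ a convex set with $A\subseteq B$ and $d':=\dim(A)=\dim(B)$. If $d'=1$, then $A=B$. Otherwise, (i) $\operatorname{rdist}(A,B)\geq\frac{1}{d'-1}\cdot\frac{\operatorname{LPgapMin}(A,B)}{1+\operatorname{LPgapMin}(A,B)}$, and (ii) $\operatorname{LPgapMin}(A,B)\geq\frac{\operatorname{rdist}(A,B)}{d'-1-\operatorname{rdist}(A,B)}$.
   Context: A $0/1$-polytope $P\subseteq[0,1]^d$ (all vertices in $\{0,1\}^d$) is up-closed if $x\in P$, $y\in[0,1]^d$, $x\leq y$ imply $y\in P$. $\operatorname{LPgapMin}(A,B)=\inf\{\varepsilon\geq0: \inf_{a\in A}c^\intercal a\leq(1+\varepsilon)\inf_{b\in B}c^\intercal b\ \ \forall c\in\mathbb{R}^d_{\geq0}\}$. For nonempty convex $A\subseteq B\subseteq\mathbb{R}^d$, $\operatorname{rdist}(A,B)=\sup_{\pi}\frac{\sup_{b\in B}\inf_{a\in A}|\pi(b)-\pi(a)|}{\sup_{a,a'\in A}|\pi(a)-\pi(a')|}$ over all linear $\pi:\mathbb{R}^d\to\mathbb{R}$, with fractions having denominator $\infty$ and $0/0$ interpreted as $0$. *)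

(* Defs.v *)
From HB Require Import structures.
From mathcomp Require Import all_boot all_order all_algebra.
From mathcomp Require Import all_classical all_reals ereal.
Set Implicit Arguments. Unset Strict Implicit. Unset Printing Implicit Defensive.
Import Order.TTheory GRing.Theory Num.Theory.
Local Open Scope classical_set_scope.
Local Open Scope ring_scope.

Section Defs.
Variables (R : realType) (d : nat).
Implicit Types (A B S : set 'rV[R]_d).

Definition cube : set 'rV[R]_d := [set x | forall i, 0 <= x 0 i <= 1].

Definition vle (x y : 'rV[R]_d) : Prop := forall i, x 0 i <= y 0 i.

Definition dotv (c x : 'rV[R]_d) : R := \sum_(i < d) c 0 i * x 0 i.

Definition conv_hull (n : nat) (V : 'I_n -> 'rV[R]_d) : set 'rV[R]_d :=
  [set x | exists lam : 'I_n -> R, (forall k, 0 <= lam k) /\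
           \sum_(k < n) lam k = 1 /\ x = \sum_(k < n) lam k *: V k].

Definition is01polytope A : Prop :=
  exists (n : nat) (V : 'I_n.+1 -> 'rV[R]_d),
    (forall k i, V k 0 i = 0 \/ V k 0 i = 1) /\ A = conv_hull V.

Definition upclosed A : Prop :=
  forall x y, A x -> cube y -> vle x y -> A y.

Definition convex_set S : Prop :=
  forall x y (t : R), S x -> S y -> 0 <= t <= 1 -> S (t *: x + (1 - t) *: y).

(* S contains k+1 affinely independent points x0, x0 + row_i M *)
Definition aff_dim_ge S (k : nat) : Prop :=
  exists (x0 : 'rV[R]_d) (M : 'M[R]_(k, d)),
    S x0 /\ (forall i, S (x0 + row i M)) /\ \rank M = k.

Definition has_aff_dim S (k : nat) : Prop :=
  aff_dim_ge S k /\ forall m, aff_dim_ge S m -> (m <= k)%N.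

Local Open Scope ereal_scope.

Definition LPgapMin A B : \bar R :=
  ereal_inf [set eps%:E | eps in [set eps : R | (0 <= eps)%R /\
     forall c : 'rV[R]_d, (forall i, (0 <= c 0 i)%R) ->
       ereal_inf [set (dotv c a)%:E | a in A]
         <= (1 + eps)%:E * ereal_inf [set (dotv c b)%:E | b in B]]].

Definition is_linear_functional (f : 'rV[R]_d -> R) : Prop :=
  forall (a : R) (u v : 'rV[R]_d), (f (a *: u + v) = a * f u + f v)%R.

(* division with conventions: x/oo = 0, 0/0 = 0, x/0 = +oo for x > 0 *)
Definition ediv (n dd : \bar R) : \bar R :=
  match dd with
  | +oo => 0
  | -oo => 0
  | r%:E => if r == 0%R then (if n == 0 then 0 else +oo) else n * (r^-1)%:E
  end.

Definition rdist_num (f : 'rV[R]_d -> R) A B : \bar R :=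
  ereal_sup [set ereal_inf [set (`|f b - f a|%R)%:E | a in A] | b in B].

Definition rdist_den (f : 'rV[R]_d -> R) A : \bar R :=
  ereal_sup [set e | exists a a', A a /\ A a' /\ e = (`|f a - f a'|%R)%:E].

Definition rdist A B : \bar R :=
  ereal_sup [set ediv (rdist_num f A B) (rdist_den f A) | f in is_linear_functional].

End Defs.

(* Main.v *)
Require Import Defs.
From HB Require Import structures.
From mathcomp Require Import all_boot all_order all_algebra.
From mathcomp Require Import all_classical all_reals ereal.
From mathcomp Require Import ring lra.
Import Order.TTheory GRing.Theory Num.Theory.
Local Open Scope classical_set_scope.
Local Open Scope ring_scope.

Set Implicit Arguments. Unset Strict Implicit. Unset Printing Implicit Defensive.


Section Dot.
Variables (R : realType) (d : nat).

Lemma dotv0 (c : 'rV[R]_d) : dotv c 0 = 0.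
Proof. by rewrite /dotv big1 // => i _; rewrite mxE mulr0. Qed.

Lemma dotvD (c x y : 'rV[R]_d) : dotv c (x + y) = dotv c x + dotv c y.
Proof. by rewrite /dotv -big_split; apply: eq_bigr => i _; rewrite mxE mulrDr. Qed.

Lemma dotvZ (c x : 'rV[R]_d) a : dotv c (a *: x) = a * dotv c x.
Proof. by rewrite /dotv mulr_sumr; apply: eq_bigr => i _; rewrite mxE mulrCA. Qed.

Lemma dotv_sum m (c : 'rV[R]_d) (F : 'I_m -> 'rV[R]_d) :
  dotv c (\sum_(k < m) F k) = \sum_(k < m) dotv c (F k).
Proof. exact: (big_morph (dotv c) (dotvD c) (dotv0 c)). Qed.

Lemma dotv_ge0 (c x : 'rV[R]_d) : (forall i, 0 <= c 0 i) -> (forall i, 0 <= x 0 i) ->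
  0 <= dotv c x.
Proof. by move=> hc hx; apply: sumr_ge0 => i _; apply: mulr_ge0. Qed.

End Dot.

Section Poly.
Variables (R : realType) (d : nat) (A : set 'rV[R]_d) (nV : nat) (V : 'I_nV.+1 -> 'rV[R]_d).
Hypotheses (V01 : forall k i, V k 0 i = 0 \/ V k 0 i = 1) (AV : A = conv_hull V)
  (upA : upclosed A).

Lemma Vin k : A (V k).
Proof.
rewrite AV; exists (fun j => (j == k)%:R); split; first by move=> j; case: (j == k).
split; first by rewrite (bigD1 k) //= eqxx big1 ?addr0 // => j /negbTE ->.
by rewrite (bigD1 k) //= eqxx scale1r big1 ?addr0 // => j /negbTE ->; rewrite scale0r.
Qed.

Lemma Acoord (a : 'rV[R]_d) i : A a ->
  exists lam : 'I_nV.+1 -> R, (forall k, 0 <= lam k) /\ \sum_k lam k = 1 /\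
    a 0 i = \sum_k lam k * V k 0 i.
Proof.
rewrite AV => -[lam [l0 [l1 ->]]]; exists lam; split => //; split => //.
by rewrite summxE; apply: eq_bigr => k _; rewrite mxE.
Qed.

Lemma Acube : A `<=` cube (R:=R) (d:=d).
Proof.
move=> a Aa i; have [lam [l0 [l1 ->]]] := Acoord i Aa.
apply/andP; split; first by apply: sumr_ge0 => k _; apply: mulr_ge0 => //; case: (V01 k i) => ->.
rewrite -l1; apply: ler_sum => k _; rewrite ler_piMr //.
by case: (V01 k i) => ->.
Qed.

Lemma A_lb (c : 'rV[R]_d) t : (forall k, t <= dotv c (V k)) ->
  forall a, A a -> t <= dotv c a.
Proof.
move=> ht a; rewrite AV => -[lam [l0 [l1 ->]]].
rewrite dotv_sum.
have -> : t = \sum_k lam k * t by rewrite -mulr_suml l1 mul1r.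
by apply: ler_sum => k _; rewrite dotvZ ler_wpM2l.
Qed.

Lemma A_conv (x y : 'rV[R]_d) t : A x -> A y -> 0 <= t <= 1 -> A (t *: x + (1 - t) *: y).
Proof.
rewrite AV => -[l [l0 [l1 ->]]] [m [m0 [m1 ->]]] /andP[t0 t1].
exists (fun k => t * l k + (1 - t) * m k); split.
  by move=> k; apply: addr_ge0; apply: mulr_ge0 => //; rewrite subr_ge0.
split; first by rewrite big_split /= -!mulr_sumr l1 m1 !mulr1 addrC subrK.
rewrite !scaler_sumr -big_split /=; apply: eq_bigr => k _.
by rewrite !scalerA scalerDl.
Qed.

Definition onev : 'rV[R]_d := const_mx 1.

Lemma one_in : A onev.
Proof.
apply: (upA (Vin ord0)).
  by move=> i; rewrite mxE ler01 lexx.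
by move=> i; rewrite mxE; have := Acube (Vin ord0) i => /andP[].
Qed.

Lemma vmin (c : 'rV[R]_d) : exists k0, forall k, dotv c (V k0) <= dotv c (V k).
Proof.
exists [arg min_(k < ord0) dotv c (V k)]%O.
by case: (arg_minP (fun k => dotv c (V k)) (isT : predT ord0)) => k _ h k'; apply: h.
Qed.

Definition Fr : {set 'I_d} := [set i | `[< exists2 a, A a & a 0 i != 1 >] ].

Lemma offFr i a : i \notin Fr -> A a -> a 0 i = 1.
Proof.
rewrite inE => /asboolPn h Aa; apply: contra_notP h => ne.
by exists a => //; apply/eqP.
Qed.

Lemma F2 i y : i \in Fr -> cube y -> (forall j, j != i -> y 0 j = 1) -> A y.
Proof.
rewrite inE => /asboolP[a Aa ai] cy hy.
have [k Vk] : exists k, V k 0 i = 0.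
  case: (pselect (exists k, V k 0 i = 0)) => // hn; exfalso; move/eqP: ai; apply.
  have [lam [l0 [l1 ->]]] := Acoord i Aa.
  rewrite -l1; apply: eq_bigr => k _.
  by case: (V01 k i) => h; [exfalso; apply: hn; exists k | rewrite h mulr1].
apply: (upA (Vin k) cy) => j.
have [->|ne] := eqVneq j i; first by rewrite Vk; have := cy i => /andP[].
by rewrite hy //; have := Acube (Vin k) j => /andP[].
Qed.

End Poly.

Section Dim.
Variables (R : realType) (d : nat) (A B : set 'rV[R]_d) (nV : nat) (V : 'I_nV.+1 -> 'rV[R]_d).
Hypotheses (V01 : forall k i, V k 0 i = 0 \/ V k 0 i = 1) (AV : A = conv_hull V)
  (upA : upclosed A) (AB : A `<=` B).

Lemma sum_ind2 (a b : 'I_d) :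
  \sum_(k < d) (if k == a then (-1 : R) else 0) * (if k == b then -1 else 0) = (a == b)%:R.
Proof.
rewrite (bigD1 a) //= eqxx big1 ?addr0; last by move=> k /negbTE ->; rewrite mul0r.
by case: eqP => _; rewrite ?mulrNN ?mulr1 ?mulr0.
Qed.

Lemma F3 d' : has_aff_dim A d' -> (#|Fr A| <= d')%N.
Proof.
move=> [_ hmax]; apply: hmax.
pose M : 'M[R]_(#|Fr A|, d) := \matrix_(j, k) (if k == enum_val j then -1 else 0).
exists (onev R d), M; split; first exact: one_in V01 AV upA.
split.
  move=> j; apply: (F2 V01 AV upA (enum_valP j)).
    move=> k; rewrite !mxE; case: eqP => _; rewrite ?addrN ?addr0 ?lexx ?ler01 //.
  by move=> k /negbTE hk; rewrite !mxE hk addr0.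
apply/eqP; rewrite eqn_leq rank_leq_row /=.
apply: (@mulmx1_min_rank _ _ _ _ _ 1%:M M^T).
apply/matrixP => j j'; rewrite mul1mx !mxE.
under eq_bigr do rewrite !mxE.
by rewrite sum_ind2 (inj_eq enum_val_inj) eq_sym.
Qed.

Lemma F4 d' b i : has_aff_dim A d' -> has_aff_dim B d' -> B b -> i \notin Fr A -> b 0 i = 1.
Proof.
move=> [[x0 [M [Ax0 [Arow rk]]]] _] [_ hmax] Bb iF.
case: (pselect (b 0 i = 1)) => // bi; exfalso.
have Mi : forall j, M j i = 0.
  move=> j; have h1 := offFr iF (Arow j); have h2 := offFr iF Ax0.
  by move: h1; rewrite !mxE h2 => h; apply: (@addrI _ 1); rewrite h addr0.
pose u := b - x0.
have ui : u 0 i != 0 by rewrite !mxE (offFr iF Ax0) subr_eq0; apply/eqP.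
have : aff_dim_ge B (1 + d').
  exists x0, (col_mx u M); split; first exact: AB.
  split.
    move=> j; case: (splitP j) => [j1 hj | j2 hj].
      have -> : j = lshift d' j1 by apply: val_inj.
      rewrite rowKu.
      have -> : row j1 u = u by apply/rowP => k; rewrite !mxE (ord1 j1).
      by rewrite addrC subrK.
    have -> : j = rshift 1 j2 by apply: val_inj.
    by rewrite rowKd; apply: AB.
  have ru : \rank u = 1%N by rewrite rank_rV; apply/eqP; rewrite eqb1; apply: contraNneq ui => ->; rewrite mxE.
  have capu : \rank (u :&: M)%MS = 0%N.
    apply/eqP; apply: contraT => h.
    have le1 := mxrankS (capmxSl u M).
    have : (\rank (u :&: M)%MS == \rank u) by rewrite eqn_leq le1 /= ru lt0n.
    rewrite (mxrank_leqif_eq (capmxSl u M)) => /eqmxP equ.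
    have : (u <= M)%MS by rewrite -equ capmxSr.
    move/submxP => [D uD]; move: ui; rewrite uD mxE big1 ?eqxx // => j _.
    by rewrite Mi mulr0.
  rewrite -(addsmxE u M).1 mxrank_disjoint_sum ?ru ?rk //.
  by apply/eqP; rewrite -mxrank_eq0 capu.
by move/hmax; rewrite addnC addn1 ltnn.
Qed.

End Dim.

Section Helpers.
Variables (R : realType) (d : nat).

Lemma sum_min (x : 'I_d -> R) t : (forall i, 0 <= x i) -> 0 <= t ->
  Num.min t (\sum_i x i) <= \sum_i Num.min (x i) t.
Proof.
move=> x0 t0.
pose K (y1 y2 : R) := 0 <= y1 /\ 0 <= y2 /\ Num.min t y1 <= y2.
suff [] : K (\sum_i x i) (\sum_i Num.min (x i) t) by move=> _ [].
apply: (big_rec2 K); first by rewrite /K lexx ge_min lexx orbT.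
move=> i y1 y2 _ [h1 [h2 h3]] /=; split; first by rewrite addr_ge0.
split; first by rewrite addr_ge0 // le_min x0.
have [xt|tx] := leP (x i) t.
  have := x0 i; move: h3; rewrite !ge_min => /orP[h|h] hx; apply/orP.
    by left; lra.
  by right; lra.
rewrite ge_min; apply/orP; left; lra.
Qed.

Lemma lin_additive (f : 'rV[R]_d -> R) : is_linear_functional f ->
  (f 0 = 0) /\ (forall u v, f (u + v) = f u + f v) /\ (forall a u, f (a *: u) = a * f u).
Proof.
move=> hf.
have f0 : f 0 = 0 by have := hf 1 0 0; rewrite scale1r addr0 mul1r; lra.
split=> //; split.
  by move=> u v; have := hf 1 u v; rewrite scale1r mul1r.
by move=> a u; have := hf a u 0; rewrite addr0 f0 addr0.
Qed.

Lemma lin_dot (f : 'rV[R]_d -> R) : is_linear_functional f ->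
  f = dotv (\row_i f 'e_i).
Proof.
move=> /lin_additive [f0 [fD fZ]]; apply/funext => x.
rewrite {1}(row_sum_delta x) (big_morph f fD f0) /dotv.
by apply: eq_bigr => i _; rewrite fZ mxE mulrC.
Qed.

Lemma dot_lin (c : 'rV[R]_d) : is_linear_functional (dotv c).
Proof. by move=> a u v; rewrite dotvD dotvZ. Qed.

End Helpers.

Section Tw.
Variable R : realType.
Implicit Types w b u v : R.

Lemma tw1 w b u : 0 <= b -> b <= 1 -> (u = 0 \/ u = 1) ->
  w * b - w * (if 0 < w then 1 else u) <=
  (if w < 0 then - w else 0) * u - (if w < 0 then - w else 0) * b.
Proof. move=> b0 b1 hu; case: hu => ->; case: ltrgt0P => hw; nra. Qed.

Lemma tw2 w b v : 0 <= b -> b <= 1 -> (v = 0 \/ v = 1) ->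
  w * (if w < 0 then 1 else v) - w * b <=
  (if 0 < w then w else 0) * v - (if 0 < w then w else 0) * b.
Proof. move=> b0 b1 hv; case: hv => ->; case: ltrgt0P => hw; nra. Qed.

Lemma tw3 w u v : (u = 0 \/ u = 1) -> (v = 0 \/ v = 1) ->
  (if w < 0 then - w else 0) - (if w < 0 then - w else 0) * u <=
  w * (if 0 < w then 1 else u) - w * (if w < 0 then 1 else v).
Proof. move=> hu hv; case: hu => ->; case: hv => ->; case: ltrgt0P => hw; nra. Qed.

Lemma tw4 w u v : (u = 0 \/ u = 1) -> (v = 0 \/ v = 1) ->
  (if 0 < w then w else 0) - (if 0 < w then w else 0) * v <=
  w * (if 0 < w then 1 else u) - w * (if w < 0 then 1 else v).
Proof. move=> hu hv; case: hu => ->; case: hv => ->; case: ltrgt0P => hw; nra. Qed.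

End Tw.

Section Main.
Variables (R : realType) (d d' : nat) (A B : set 'rV[R]_d) (nV : nat) (V : 'I_nV.+1 -> 'rV[R]_d).
Hypotheses (V01 : forall k i, V k 0 i = 0 \/ V k 0 i = 1) (AV : A = conv_hull V)
  (upA : upclosed A) (Bc : B `<=` cube (R:=R) (d:=d)) (AB : A `<=` B)
  (hA : has_aff_dim A d') (hB : has_aff_dim B d').

Lemma nle : (#|Fr A| <= d')%N.
Proof. exact (F3 V01 AV upA hA). Qed.

Lemma BF b i : B b -> i \notin Fr A -> b 0 i = 1.
Proof. by move=> Bb iF; apply: (F4 AB hA hB Bb iF). Qed.

Lemma Vge0 k i : 0 <= V k 0 i.
Proof. by case: (V01 k i) => ->. Qed.

Lemma Bge0 b i : B b -> 0 <= b 0 i.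
Proof. by move=> /Bc /(_ i) /andP[]. Qed.

Lemma Ble1 b i : B b -> b 0 i <= 1.
Proof. by move=> /Bc /(_ i) /andP[]. Qed.

Lemma Ainf c k0 : (forall k, dotv c (V k0) <= dotv c (V k)) ->
  ereal_inf [set (dotv c a)%:E | a in A] = (dotv c (V k0))%:E.
Proof.
move=> hk; apply/le_anti/andP; split.
  by apply: ereal_inf_lbound; exists (V k0) => //; exact: Vin AV k0.
by apply: le_ereal_inf_tmp => _ [a Aa <-]; rewrite lee_fin; exact: (A_lb AV hk Aa).
Qed.

Lemma KI (c : 'rV[R]_d) k0 b eps : (1 < d')%N -> 0 <= eps -> (forall i, 0 <= c 0 i) ->
  (forall k, dotv c (V k0) <= dotv c (V k)) -> B b ->
  (1 + eps) * dotv c b < dotv c (V k0) ->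
  (((eps / (1 + eps)) / (d'%:R - 1))%:E < rdist A B)%E.
Proof.
move=> d1 eps0 c0 hk Bb hb.
set al := dotv c (V k0).
have hmin : forall a, A a -> al <= dotv c a by apply: (A_lb AV hk).
set k := \sum_i (if i \in Fr A then 0 else c 0 i).
have k0' : 0 <= k by apply: sumr_ge0 => i _; case: ifP.
have splitA : forall a, A a -> dotv c a = k + \sum_i (if i \in Fr A then c 0 i * a 0 i else 0).
  move=> a Aa; rewrite /dotv /k -big_split; apply: eq_bigr => i _ /=.
  by case: ifP => iF; rewrite ?add0r ?addr0 // (offFr (negbT iF) Aa) mulr1.
have splitB : dotv c b = k + \sum_i (if i \in Fr A then c 0 i * b 0 i else 0).
  rewrite /dotv /k -big_split; apply: eq_bigr => i _ /=.
  by case: ifP => iF; rewrite ?add0r ?addr0 // (BF Bb (negbT iF)) mulr1.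
set al' := al - k.
have al'E : al' = al - k by [].
have al'0 : 0 <= al'.
  rewrite al'E /al (splitA _ (Vin AV k0)) addrAC subrr add0r.
  by apply: sumr_ge0 => i _; case: ifP => // _; apply: mulr_ge0 => //; apply: Vge0.
set c' : 'rV[R]_d := \row_i (if i \in Fr A then Num.min (c 0 i) al' else 0).
have c'0 : forall i, 0 <= c' 0 i.
  by move=> i; rewrite mxE; case: ifP => // _; rewrite le_min c0.
have ha : forall a, A a -> al' <= dotv c' a.
  apply: (A_lb AV) => kk.
  have Sv : al' <= \sum_i (if i \in Fr A then c 0 i * V kk 0 i else 0).
    by rewrite al'E lerBlDl -splitA; [apply: hmin; exact: Vin AV kk | exact: Vin AV kk].
  have xge : forall i, 0 <= (fun i => if i \in Fr A then c 0 i * V kk 0 i else 0) i.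
    by move=> i /=; case: ifP => // _; apply: mulr_ge0 => //; apply: Vge0.
  have hs := sum_min xge al'0.
  apply: le_trans (_ : al' <= Num.min al' (\sum_i (if i \in Fr A then c 0 i * V kk 0 i else 0))) (le_trans hs _).
    by rewrite le_min lexx Sv.
  rewrite /dotv; apply: ler_sum => i _; rewrite mxE; case: ifP => iF.
    by case: (V01 kk i) => ->; rewrite ?mulr0 ?mulr1 // ge_min lexx.
  by rewrite mul0r ge_min lexx.
have sumc' : \sum_i c' 0 i <= (#|Fr A|)%:R * al'.
  apply: (@le_trans _ _ (\sum_i (if i \in Fr A then al' else 0))).
    by apply: ler_sum => i _; rewrite mxE; case: ifP => // _; rewrite ge_min lexx orbT.
  by rewrite -big_mkcond sumr_const mulr_natl.
have hup : forall a, A a -> dotv c' a <= \sum_i c' 0 i.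
  move=> a Aa; apply: ler_sum => i _; rewrite ler_piMr //.
  by have := Acube V01 AV Aa i => /andP[].
have Dm1 : 0 < d'%:R - 1 :> R by rewrite subr_gt0 ltr1n.
have NleD : (#|Fr A|)%:R * al' <= d'%:R * al' by rewrite ler_wpM2r // ler_nat nle.
have den_le : (rdist_den (dotv c') A <= ((d'%:R - 1) * al')%:E)%E.
  apply: ge_ereal_sup => _ [a [a' [Aa [Aa' ->]]]]; rewrite lee_fin.
  have := ha a Aa; have := ha a' Aa'; have := hup a Aa; have := hup a' Aa'.
  rewrite ler_norml; move: sumc' NleD; lra.
have den_ge : (0 <= rdist_den (dotv c') A)%E.
  apply: le_ereal_sup_tmp; exists 0%:E => //.
  exists (onev R d), (onev R d); split; first exact: one_in V01 AV upA.
  by split; [exact: one_in V01 AV upA | rewrite subrr normr0].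
have hcb : dotv c' b <= dotv c b - k.
  rewrite splitB addrAC subrr add0r /dotv; apply: ler_sum => i _; rewrite mxE.
  case: ifP => _; last by rewrite mul0r.
  by rewrite ler_wpM2r ?ge_min ?lexx //; apply: Bge0.
have num_ge : ((al - dotv c b)%:E <= rdist_num (dotv c') A B)%E.
  apply: le_ereal_sup_tmp.
  exists (ereal_inf [set (`|dotv c' b - dotv c' a|)%:E | a in A]); first by exists b.
  apply: le_ereal_inf_tmp => _ [a Aa <-]; rewrite lee_fin distrC.
  apply: le_trans (ler_norm _); have := ha a Aa; move: hcb; rewrite al'E; lra.
apply: (@lt_le_trans _ _ (ediv (rdist_num (dotv c') A B) (rdist_den (dotv c') A))); last first.
  by apply: ereal_sup_ubound; exists (dotv c') => //; apply: dot_lin.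
case Eden : (rdist_den (dotv c') A) => [r||]; rewrite Eden in den_le den_ge => //.
rewrite lee_fin in den_le den_ge; rewrite /=.
have cbpos : 0 < al - dotv c b.
  have hcb0 : 0 <= dotv c b by apply: dotv_ge0 => // i; apply: Bge0.
  have := mulr_ge0 eps0 hcb0; move: hb; rewrite mulrDl mul1r /al; lra.
case: eqP => [r0|/eqP r0].
  case: eqP => [h0|_]; last by rewrite ltey.
  have : ((0:R)%:E < (al - dotv c b)%:E)%E by rewrite lte_fin.
  by move=> /lt_le_trans /(_ num_ge); rewrite h0 ltxx.
have rpos : 0 < r by rewrite lt_neqAle eq_sym r0.
apply: (@lt_le_trans _ _ ((al - dotv c b)%:E * (r^-1)%:E)%E); last first.
  by apply: lee_wpmul2r => //; rewrite lee_fin invr_ge0 ltW.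
rewrite -EFinM lte_fin ltr_pdivlMr //.
set e1 := eps / (1 + eps).
have e10 : 0 <= e1 by rewrite divr_ge0 // addr_ge0.
have h1 : e1 / (d'%:R - 1) * r <= e1 * al'.
  rewrite -mulrA ler_wpM2l // mulrC ler_pdivrMr //; lra.
have h2 : e1 * al' <= e1 * al by rewrite ler_wpM2l // al'E; lra.
have h3 : al - dotv c b - e1 * al = (al - (1 + eps) * dotv c b) / (1 + eps).
  rewrite /e1; field; lra.
have h4 : 0 < (al - (1 + eps) * dotv c b) / (1 + eps).
  by rewrite divr_gt0 //; rewrite /al; lra.
lra.
Qed.

Lemma L_bound (c : 'rV[R]_d) k0 : (forall i, 0 <= c 0 i) ->
  (forall i, i \notin Fr A -> c 0 i = 0) ->
  (forall k, dotv c (V k0) <= dotv c (V k)) ->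
  d'%:R * dotv c (V k0) <= (d'%:R - 1) * \sum_i c 0 i.
Proof.
move=> c0 cF hk.
set al := dotv c (V k0); set S := \sum_i c 0 i.
have hmin : forall a, A a -> al <= dotv c a by move=> a Aa; exact: (A_lb AV hk Aa).
have hal : al <= S.
  have := hmin _ (one_in V01 AV upA); rewrite /dotv /S.
  by under eq_bigr do rewrite mxE mulr1.
have hi : forall i, i \in Fr A -> al <= S - c 0 i.
  move=> i iF.
  have Ay : A (\row_j (if j == i then 0 else 1)).
    apply: (F2 V01 AV upA iF).
      by move=> j; rewrite mxE; case: ifP; rewrite ?lexx ?ler01.
    by move=> j /negbTE hj; rewrite mxE hj.
  have := hmin _ Ay; rewrite /dotv /S (bigD1 i) //= [X in _ -> _ <= X - _](bigD1 i) //=.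
  rewrite mxE eqxx mulr0 add0r addrAC subrr add0r.
  by under eq_bigr => j hj do rewrite mxE (negbTE hj) mulr1.
have SF : \sum_(i in Fr A) c 0 i = S.
  rewrite big_mkcond /S; apply: eq_bigr => i _; case: ifP => // iF.
  by rewrite cF // iF.
have hsum : #|Fr A|%:R * al <= #|Fr A|%:R * S - S.
  have : \sum_(i in Fr A) al <= \sum_(i in Fr A) (S - c 0 i) by apply: ler_sum => i iF; apply: hi.
  by rewrite sumrB SF !sumr_const -[al *+ _]mulr_natl -[S *+ _]mulr_natl.
have NleD : (#|Fr A|%:R : R) <= d'%:R by rewrite ler_nat nle.
have h1 : 0 <= d'%:R - #|Fr A|%:R :> R by rewrite subr_ge0.
have h2 : 0 <= S - al by rewrite subr_ge0.
have := mulr_ge0 h1 h2.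
lra.
Qed.

Lemma rdist_ge0 : (0 <= rdist A B)%E.
Proof.
have A1 := one_in V01 AV upA.
apply: le_ereal_sup_tmp.
exists (ediv (rdist_num (fun _ => 0) A B) (rdist_den (fun _ => 0) A)).
  by exists (fun _ => 0) => // a u v; rewrite mulr0 addr0.
have inner : forall b : 'rV[R]_d, ereal_inf [set (`|(0:R) - 0|)%:E | _ in A] = 0%:E.
  move=> b; apply: le_anti; apply/andP; split.
    by apply: ereal_inf_lbound; exists (onev R d) => //; rewrite subrr normr0.
  by apply: le_ereal_inf_tmp => _ [a Aa <-]; rewrite subrr normr0.
have -> : rdist_num (fun _ => 0) A B = 0%:E.
  apply: le_anti; apply/andP; split.
    by apply: ge_ereal_sup => _ [b Bb <-]; rewrite (inner b).
  apply: le_ereal_sup_tmp; exists 0%:E => //.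
  exists (onev R d); first exact: AB A1.
  apply: le_anti; apply/andP; split.
    by apply: ereal_inf_lbound; exists (onev R d) => //=; rewrite subrr normr0.
  by apply: le_ereal_inf_tmp => _ [a Aa <-]; rewrite /= subrr normr0.
by case: (rdist_den _ A) => [r||] //=; case: eqP => _; rewrite ?eqxx ?mul0e.
Qed.

Lemma KII eps : (0 < d')%N -> 0 <= eps ->
  (forall c : 'rV[R]_d, (forall i, 0 <= c 0 i) -> forall k0, (forall k, dotv c (V k0) <= dotv c (V k)) ->
     forall b, B b -> dotv c (V k0) <= (1 + eps) * dotv c b) ->
  forall f, is_linear_functional f ->
  (ediv (rdist_num f A B) (rdist_den f A) <= ((d'%:R - 1) * (eps / (1 + eps)))%:E)%E.
Proof.
move=> dpos eps0 hyp f /lin_dot ->.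
move: (\row_i f 'e_i) => w.
set p : 'rV[R]_d := \row_i (if (i \in Fr A) && (0 < w 0 i) then w 0 i else 0).
set q : 'rV[R]_d := \row_i (if (i \in Fr A) && (w 0 i < 0) then - w 0 i else 0).
have p0 : forall i, 0 <= p 0 i by move=> i; rewrite mxE; case: ifP => // /andP[_ /ltW].
have q0 : forall i, 0 <= q 0 i.
  by move=> i; rewrite mxE; case: ifP => // /andP[_ h]; rewrite oppr_ge0 ltW.
have pF : forall i, i \notin Fr A -> p 0 i = 0 by move=> i /negbTE hi; rewrite mxE hi.
have qF : forall i, i \notin Fr A -> q 0 i = 0 by move=> i /negbTE hi; rewrite mxE hi.
have [kv hv] := vmin V p; have [ku hu] := vmin V q.
set v := V kv; set u := V ku.
have Av : A v by exact: Vin AV kv.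
have Au : A u by exact: Vin AV ku.
have v01 := V01 kv; have u01 := V01 ku.
set ahi : 'rV[R]_d := \row_i (if 0 < w 0 i then 1 else u 0 i).
set alo : 'rV[R]_d := \row_i (if w 0 i < 0 then 1 else v 0 i).
have Ahi : A ahi.
  apply: (upA Au).
    by move=> i; rewrite mxE; case: ifP => _; [rewrite ler01 lexx | case: (u01 i) => ->; rewrite ?ler01 ?lexx].
  by move=> i; rewrite mxE; case: ifP => _ //; case: (u01 i) => ->; rewrite ?ler01 ?lexx.
have Alo : A alo.
  apply: (upA Av).
    by move=> i; rewrite mxE; case: ifP => _; [rewrite ler01 lexx | case: (v01 i) => ->; rewrite ?ler01 ?lexx].
  by move=> i; rewrite mxE; case: ifP => _ //; case: (v01 i) => ->; rewrite ?ler01 ?lexx.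
have FHI : forall b, B b -> dotv w b - dotv w ahi <= dotv q u - dotv q b.
  move=> b Bb; rewrite /dotv -!sumrB; apply: ler_sum => i _; rewrite !mxE.
  have b0 := Bge0 i Bb; have b1 := Ble1 i Bb.
  case: (boolP (i \in Fr A)) => iF /=.
    by apply: tw1.
  by rewrite (BF Bb iF) (offFr iF Au); case: ifP => _; lra.
have FLO : forall b, B b -> dotv w alo - dotv w b <= dotv p v - dotv p b.
  move=> b Bb; rewrite /dotv -!sumrB; apply: ler_sum => i _; rewrite !mxE.
  have b0 := Bge0 i Bb; have b1 := Ble1 i Bb.
  case: (boolP (i \in Fr A)) => iF /=.
    by apply: tw2.
  by rewrite (BF Bb iF) (offFr iF Av); case: ifP => _; lra.
set D := dotv w ahi - dotv w alo.
have Dq : \sum_i q 0 i - dotv q u <= D.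
  rewrite /D /dotv -!sumrB; apply: ler_sum => i _; rewrite !mxE.
  case: (boolP (i \in Fr A)) => iF /=.
    by apply: tw3.
  by rewrite (offFr iF Au) (offFr iF Av); case: ifP => _; case: ifP => _; lra.
have Dp : \sum_i p 0 i - dotv p v <= D.
  rewrite /D /dotv -!sumrB; apply: ler_sum => i _; rewrite !mxE.
  case: (boolP (i \in Fr A)) => iF /=.
    by apply: tw4.
  by rewrite (offFr iF Au) (offFr iF Av); case: ifP => _; case: ifP => _; lra.
have Sq : dotv q u <= \sum_i q 0 i.
  apply: ler_sum => i _; rewrite ler_piMr //; by case: (u01 i) => ->; rewrite ?ler01 ?lexx.
have D0 : 0 <= D by lra.
have Dm1 : 0 <= d'%:R - 1 :> R by rewrite subr_ge0 ler1n.
have LBq : dotv q u <= (d'%:R - 1) * D.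
  have := L_bound q0 qF hu; have := ler_wpM2l Dm1 Dq; lra.
have LBp : dotv p v <= (d'%:R - 1) * D.
  have := L_bound p0 pF hv; have := ler_wpM2l Dm1 Dp; lra.
set e1 := eps / (1 + eps).
have e10 : 0 <= e1 by rewrite divr_ge0 // addr_ge0.
set T := (d'%:R - 1) * e1.
have T0 : 0 <= T by rewrite mulr_ge0.
have key : forall al x, al <= (1 + eps) * x -> al - x <= e1 * al.
  move=> al x h.
  have -> : al - x = e1 * al + (al - (1 + eps) * x) / (1 + eps) by rewrite /e1; field; lra.
  have : (al - (1 + eps) * x) / (1 + eps) <= 0.
    by apply: mulr_le0_ge0; [lra | rewrite invr_ge0; lra].
  lra.
have inner_le : forall b, B b ->
    (ereal_inf [set (`|dotv w b - dotv w a|)%:E | a in A] <= (T * D)%:E)%E.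
  move=> b Bb.
  have [hi|hi] := ltrP (dotv w ahi) (dotv w b).
    apply: ge_ereal_inf; exists (`|dotv w b - dotv w ahi|)%:E; first by exists ahi.
    rewrite lee_fin ger0_norm; last by lra.
    have := key _ _ (hyp q q0 ku hu b Bb); have := FHI b Bb.
    have := ler_wpM2l e10 LBq; rewrite /T; lra.
  have [lo|lo] := ltrP (dotv w b) (dotv w alo).
    apply: ge_ereal_inf; exists (`|dotv w b - dotv w alo|)%:E; first by exists alo.
    rewrite lee_fin distrC ger0_norm; last by lra.
    have := key _ _ (hyp p p0 kv hv b Bb); have := FLO b Bb.
    have := ler_wpM2l e10 LBp; rewrite /T; lra.
  have [a Aa ha] : exists2 a, A a & dotv w a = dotv w b.
    case: (eqVneq D 0) => [D00|Dn0].
      by exists alo => //; move: D00; rewrite /D; lra.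
    have Dpos : 0 < D by rewrite lt_neqAle eq_sym Dn0 D0.
    set t := (dotv w b - dotv w alo) / D.
    exists (t *: ahi + (1 - t) *: alo).
      apply: (A_conv AV) => //; apply/andP; split.
        by rewrite /t divr_ge0 //; lra.
      by rewrite /t ler_pdivrMr // mul1r /D; lra.
    rewrite dotvD !dotvZ /t; move: Dpos; rewrite /D => Dpos; field; lra.
  apply: ge_ereal_inf; exists (`|dotv w b - dotv w a|)%:E; first by exists a.
  by rewrite ha subrr normr0 lee_fin mulr_ge0.
have num_le : (rdist_num (dotv w) A B <= (T * D)%:E)%E.
  by apply: ge_ereal_sup => _ [b Bb <-]; apply: inner_le.
have num_ge : (0%R%:E <= rdist_num (dotv w) A B)%E.
  apply: le_ereal_sup_tmp.
  exists (ereal_inf [set (`|dotv w (onev R d) - dotv w a|)%:E | a in A]).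
    by exists (onev R d) => //; apply: AB; exact: one_in V01 AV upA.
  by apply: le_ereal_inf_tmp => _ [a Aa <-]; rewrite lee_fin.
have den_ge : (D%:E <= rdist_den (dotv w) A)%E.
  apply: le_ereal_sup_tmp; exists (`|dotv w ahi - dotv w alo|)%:E.
    by exists ahi, alo.
  by rewrite lee_fin ler_norm.
case Eden : (rdist_den (dotv w) A) => [r||] /=; rewrite Eden in den_ge; try by rewrite lee_fin.
rewrite lee_fin in den_ge.
case: eqP => [r0|/eqP r0].
  have -> : rdist_num (dotv w) A B = 0%R%:E.
    apply/le_anti/andP; split => //.
    have D00 : D = 0 by apply/le_anti/andP; split; lra.
    by apply: (le_trans num_le); rewrite lee_fin D00 mulr0.
  by rewrite eqxx lee_fin.
have rpos : 0 < r by rewrite lt_neqAle eq_sym r0; lra.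
apply: (@le_trans _ _ ((T * D)%:E * (r^-1)%:E)%E).
  by apply: lee_wpmul2r => //; rewrite lee_fin invr_ge0 ltW.
rewrite -EFinM lee_fin ler_pdivrMr // -/e1 -/T.
by rewrite ler_wpM2l.
Qed.

End Main.

Unset Implicit Arguments. Set Strict Implicit. Set Printing Implicit Defensive.

Theorem mainTheorem6 (R : realType) (d d' : nat) (A B : set 'rV[R]_d) :
  is01polytope A -> upclosed A ->
  convex_set B -> B `<=` @cube R d -> A `<=` B ->
  has_aff_dim A d' -> has_aff_dim B d' ->
  (d' = 1%N -> A = B) /\
  (d' <> 1%N ->
    (* (i) *)
    (forall L : R, LPgapMin A B = L%:E ->
       (((d'%:R - 1)^-1 * (L / (1 + L)))%:E <= rdist A B)%E) /\
    (LPgapMin A B = +oo%E -> (((d'%:R - 1)^-1)%:E <= rdist A B)%E) /\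
    (* (ii) *)
    (forall r : R, rdist A B = r%:E -> r < d'%:R - 1 ->
       ((r / (d'%:R - 1 - r))%:E <= LPgapMin A B)%E) /\
    (rdist A B = (d'%:R - 1)%:E -> LPgapMin A B = +oo%E)).
Proof.
move=> [nV [V [V01 AV]]] upA _ Bc AB hA hB.
have A1 := one_in V01 AV upA.
have rd0 := rdist_ge0 V01 AV upA AB.
have LP0 : (0%:E <= LPgapMin A B)%E.
  by apply: le_ereal_inf_tmp => _ [eps [e0 _] <-]; rewrite lee_fin.
split.
  move=> d1; apply/seteqP; split => // b Bb.
  have n1 := nle V01 AV upA hA; rewrite d1 in n1.
  set y : 'rV[R]_d := \row_j (if j \in Fr A then 0 else 1).
  have Ay : A y.
    case: (set_0Vmem (Fr A)) => [F0 | [i0 i0F]].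
      apply: (upA (onev R d) y A1).
        by move=> j; rewrite mxE F0 inE lexx ler01.
      by move=> j; rewrite !mxE F0 inE lexx.
    apply: (F2 V01 AV upA i0F).
      by move=> j; rewrite mxE; case: ifP; rewrite ?lexx ?ler01.
    move=> j ji; rewrite mxE; case: ifP => // jF; exfalso.
    have : (#|[set i0; j]%SET| <= #|Fr A|)%N.
      by apply: subset_leq_card; apply/fintype.subsetP => k /set2P [-> | ->].
    by rewrite cards2 eq_sym ji => /leq_trans /(_ n1).
  apply: (upA y b Ay (Bc _ Bb)) => j; rewrite mxE; case: ifP => jF.
    by have := Bc _ Bb j => /andP[].
  by rewrite (BF AB hA hB Bb (negbT jF)).
move=> dn1.
case: (ltnP 1 d') => [d2|]; last first.
  rewrite leq_eqVlt ltnS leqn0 (negbTE (introN eqP dn1)) /= => /eqP d0; subst d'.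
  rewrite !sub0r invrN1.
  split.
    move=> L EL; apply: le_trans rd0; rewrite lee_fin mulN1r oppr_le0.
    have : (0%:E <= L%:E)%E by rewrite -EL.
    by rewrite lee_fin => L0; rewrite divr_ge0 // addr_ge0.
  split; first by move=> _; apply: le_trans rd0; rewrite lee_fin lerN10.
  split.
    move=> r Er hr; exfalso; have : (0%:E <= r%:E)%E by rewrite -Er.
    by rewrite lee_fin; lra.
  move=> Er; exfalso; move: rd0; rewrite Er lee_fin; lra.
have Dm1 : 0 < d'%:R - 1 :> R by rewrite subr_gt0 ltr1n.
have Dm1n : d'%:R - 1 != 0 :> R by rewrite gt_eqF.
pose S := [set eps : R | (0 <= eps)%R /\
     forall c : 'rV[R]_d, (forall i, (0 <= c 0 i)%R) ->
       (ereal_inf [set (dotv c a)%:E | a in A]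
         <= (1 + eps)%:E * ereal_inf [set (dotv c b)%:E | b in B])%E].
have LPE : LPgapMin A B = ereal_inf [set eps%:E | eps in S] by [].
have Sin : forall eps, S eps -> (rdist A B <= ((d'%:R - 1) * (eps / (1 + eps)))%:E)%E.
  move=> eps [e0 hS]; apply: ge_ereal_sup => _ [f hf <-].
  apply: (KII V01 AV upA Bc AB hA hB) => //; first exact: ltnW.
  move=> c c0 k0 hk b Bb.
  have := hS c c0; rewrite (Ainf AV hk) => h.
  have h2 : ((1 + eps)%:E * ereal_inf [set (dotv c b0)%:E | b0 in B] <= (1 + eps)%:E * (dotv c b)%:E)%E.
    apply: lee_wpmul2l; first by rewrite lee_fin; lra.
    by apply: ereal_inf_lbound; exists b.
  by have := le_trans h h2; rewrite -EFinM lee_fin.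
have Sfail : forall eps, 0 <= eps -> ~ S eps ->
    (((eps / (1 + eps)) / (d'%:R - 1))%:E < rdist A B)%E.
  move=> eps e0 nS.
  have [c [c0 nc]] : exists c : 'rV[R]_d, (forall i, 0 <= c 0 i) /\
      ~ (ereal_inf [set (dotv c a)%:E | a in A] <= (1 + eps)%:E * ereal_inf [set (dotv c b)%:E | b in B])%E.
    apply: contra_notP nS => hn; split => // c c0.
    by apply: contra_notP hn => hc; exists c.
  have [k0 hk] := vmin V c.
  rewrite (Ainf AV hk) in nc.
  case: (pselect (exists2 b, B b & (1 + eps) * dotv c b < dotv c (V k0))) => [[b Bb hb]|nb].
    exact: (KI V01 AV upA Bc AB hA hB d2 e0 c0 hk Bb hb).
  exfalso; apply: nc.
  have e1 : 1 + eps != 0 by rewrite gt_eqF //; lra.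
  have hle : ((dotv c (V k0) / (1 + eps))%:E <= ereal_inf [set (dotv c b)%:E | b in B])%E.
    apply: le_ereal_inf_tmp => _ [b Bb <-]; rewrite lee_fin ler_pdivrMr; last by lra.
    by rewrite [_ * (1 + eps)]mulrC leNgt; apply/negP => hb; apply: nb; exists b.
  apply: (le_trans _ (lee_wpmul2l _ hle)); last by rewrite lee_fin; lra.
  by rewrite -EFinM mulrC divfK.
split.
  move=> L EL.
  have L0 : 0 <= L by move: LP0; rewrite EL lee_fin.
  case Erd : (rdist A B) => [r||]; last 2 first.
  - by rewrite leey.
  - by move: rd0; rewrite Erd.
  rewrite lee_fin leNgt; apply/negP => hlt.
  have r0 : 0 <= r by move: rd0; rewrite Erd lee_fin.
  set s := (d'%:R - 1) * r.
  have s0 : 0 <= s by rewrite mulr_ge0 // ltW.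
  have sL : s < L / (1 + L).
    have -> : L / (1 + L) = (d'%:R - 1) * ((d'%:R - 1)^-1 * (L / (1 + L))).
      by rewrite mulrA mulfV // mul1r.
    by rewrite /s ltr_pM2l.
  have s1 : s < 1.
    apply: (lt_le_trans sL); rewrite ler_pdivrMr; lra.
  move: sL; rewrite ltr_pdivlMr; last by lra.
  move=> sL.
  set e := s / (1 - s).
  have e0 : 0 <= e by rewrite divr_ge0 //; lra.
  have eL : e < L by rewrite /e ltr_pdivrMr; lra.
  have nSe : ~ S e.
    move=> Se; have : (L%:E <= e%:E)%E.
      by rewrite -EL LPE; apply: ereal_inf_lbound; exists e.
    by rewrite lee_fin; lra.
  have := Sfail e e0 nSe; rewrite Erd lte_fin.
  have hs : 1 - s != 0 by rewrite subr_eq0 eq_sym lt_eqF.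
  have -> : e / (1 + e) = s.
    rewrite /e; field; rewrite ?hs //.
    by rewrite subrK oner_neq0.
  by rewrite /s mulrAC mulfV // mul1r ltxx.
split.
  move=> EL.
  case Erd : (rdist A B) => [r||]; last 2 first.
  - by rewrite leey.
  - by move: rd0; rewrite Erd.
  rewrite lee_fin leNgt; apply/negP => hlt.
  have r0 : 0 <= r by move: rd0; rewrite Erd lee_fin.
  set s := (d'%:R - 1) * r.
  have s0 : 0 <= s by rewrite mulr_ge0 // ltW.
  have s1 : s < 1.
    have : (d'%:R - 1) * r < (d'%:R - 1) * (d'%:R - 1)^-1 by rewrite ltr_pM2l.
    by rewrite mulfV.
  set e := s / (1 - s).
  have e0 : 0 <= e by rewrite divr_ge0 //; lra.
  have nSe : ~ S e.
    move=> Se; have : (+oo <= e%:E)%E.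
      by rewrite -EL LPE; apply: ereal_inf_lbound; exists e.
    by rewrite leye_eq.
  have := Sfail e e0 nSe; rewrite Erd lte_fin.
  have hs : 1 - s != 0 by rewrite subr_eq0 eq_sym lt_eqF.
  have -> : e / (1 + e) = s.
    rewrite /e; field; rewrite ?hs //.
    by rewrite subrK oner_neq0.
  by rewrite /s mulrAC mulfV // mul1r ltxx.
split.
  move=> r Er hr.
  rewrite LPE; apply: le_ereal_inf_tmp => _ [eps Se <-].
  have e0 : 0 <= eps by case: Se.
  have := Sin eps Se; rewrite Er lee_fin => h.
  have he : 0 <= 1 + eps by lra.
  have h2 : r * (1 + eps) <= (d'%:R - 1) * (eps / (1 + eps)) * (1 + eps) by rewrite ler_wpM2r.
  have e3 : (d'%:R - 1) * (eps / (1 + eps)) * (1 + eps) = (d'%:R - 1) * eps.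
    by field; rewrite gt_eqF //; lra.
  rewrite lee_fin ler_pdivrMr; last by lra.
  move: h2; rewrite e3; lra.
move=> Er.
case: (pselect (exists e, S e)) => [[e Se]|nS].
  exfalso.
  have e0 : 0 <= e by case: Se.
  have := Sin e Se; rewrite Er lee_fin.
  have : e / (1 + e) < 1 by rewrite ltr_pdivrMr; lra.
  rewrite -(ltr_pM2l Dm1) mulr1; lra.
have S0 : S = set0 by rewrite predeqE => e; split => // Se; apply: nS; exists e.
by rewrite LPE S0 image_set0 ereal_inf0.
Qed.
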